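(* Let $l$ be odd, $K$ a field of characteristic $0$ and $q\in K$ such that $q^2$ is a primitive $l$-th root of unity. For every $n$ with $2\le n\le l-1$, $$\sum_{i=0}^{l-1}S_{i,n}(1,q^2,q^4,\dots,q^{2(n-1)})=\frac{l}{(1-q^2)(1-q^4)\cdots(1-q^{2(n-1)})},$$ where $S_{d,n}(x_1,\dots,x_n)=\sum_{1\le i_1\le\cdots\le i_d\le n}x_{i_1}\cdots x_{i_d}$ and $S_{0,n}=1$. *)

(* Defs.v *)
From HB Require Import structures.
From mathcomp Require Import all_boot all_order all_algebra.
Set Implicit Arguments. Unset Strict Implicit. Unset Printing Implicit Defensive.
Import GRing.Theory.
Local Open Scope ring_scope.

(* For d = 0 the only tuple is the empty one,
   giving S_{0,n} = 1. *)
Definition hsym (K : comRingType) (n d : nat) (x : 'I_n -> K) : K :=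
  \sum_(t : d.-tuple 'I_n | sorted (fun a b : 'I_n => (a <= b)%N) t)
     \prod_(j <- t) x j.

(* Main.v *)
Require Import Defs.
From HB Require Import structures.
From mathcomp Require Import all_boot all_order all_algebra.
From mathcomp Require Import zify ring.
Import GRing.Theory.
Local Open Scope ring_scope.

Lemma sum_tuple_cons (R : nmodType) (T : finType) d (P : pred (d.+1.-tuple T))
  (F : d.+1.-tuple T -> R) :
  \sum_(t : d.+1.-tuple T | P t) F t =
  \sum_(a : T) \sum_(t : d.-tuple T | P (cons_tuple a t)) F (cons_tuple a t).
Proof.
rewrite pair_big_dep /=.
rewrite (reindex (fun p : T * d.-tuple T => cons_tuple p.1 p.2)) //=.
exists (fun t => (thead t, behead_tuple t)) => [[a t] _ | t _] /=.
  by congr pair; apply: val_inj.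
by rewrite [t in RHS]tuple_eta.
Qed.

Definition leo n := fun a b : 'I_n => (a <= b)%N.
Lemma leo_trans n : transitive (@leo n).
Proof. by move=> a b c; rewrite /leo => h1 h2; apply: leq_trans h1 h2. Qed.

Lemma hsym_ext (K : comRingType) n d (x y : 'I_n -> K) :
  (forall i, x i = y i) -> hsym d x = hsym d y.
Proof. by move=> h; apply: eq_bigr => t _; apply: eq_bigr => j _. Qed.

Lemma lift_part (K : comRingType) m d (x : 'I_m.+1 -> K) (b : 'I_m) :
  \sum_(t : d.-tuple 'I_m.+1 | path (@leo m.+1) (lift ord0 b) t) \prod_(j <- t) x j =
  \sum_(t : d.-tuple 'I_m | path (@leo m) b t) \prod_(j <- t) x (lift ord0 j).
Proof.
rewrite (reindex_onto (fun t : d.-tuple 'I_m => map_tuple (lift ord0) t)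
   (fun t : d.-tuple 'I_m.+1 => map_tuple (fun i => odflt b (unlift ord0 i)) t)).
  apply: eq_big => t.
    rewrite /= path_map.
    have -> : map_tuple (fun i => odflt b (unlift ord0 i)) (map_tuple (lift ord0) t) = t.
      apply: val_inj => /=; rewrite -map_comp -[RHS]map_id; apply: eq_map => i /=.
      by rewrite liftK.
    rewrite eqxx andbT; apply: eq_path => u v; rewrite /leo /=.
    idtac.
    by rewrite /bump /= !add1n.
  by move=> _; rewrite big_map.
move=> t; rewrite (path_sortedE (@leo_trans _)) => /andP[ha _].
apply: val_inj => /=; rewrite -map_comp -[RHS]map_id; apply/eq_in_map => i it /=.
have := allP ha i it; rewrite /leo lift0 => hi.
case: unliftP => [j ->|e] //=.
by move: hi; rewrite e.
Qed.

Lemma hsym_head (K : comRingType) m d (x : 'I_m.+1 -> K) :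
  hsym d.+1 x = hsym d.+1 (fun i : 'I_m => x (lift ord0 i)) + x ord0 * hsym d x.
Proof.
rewrite /hsym sum_tuple_cons big_ord_recl /= addrC; congr (_ + _); last first.
  rewrite mulr_sumr; apply: eq_big => t.
    by rewrite /= (path_sortedE (@leo_trans _)) (_ : all _ t = true) //; apply/allP.
  by move=> _; rewrite big_cons.
rewrite sum_tuple_cons; apply: eq_bigr => b _.
under eq_bigr do rewrite /= big_cons.
under [RHS]eq_bigr do rewrite /= big_cons.
rewrite -!mulr_sumr; congr (_ * _).
by rewrite (@lift_part _ m d x b); apply: eq_bigl => t.
Qed.

Lemma hsym_rev (K : comRingType) n d (x : 'I_n -> K) :
  hsym d (fun i => x (rev_ord i)) = hsym d x.
Proof.
pose h := fun t : d.-tuple 'I_n => rev_tuple (map_tuple (@rev_ord n) t).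
have hh : forall t, h (h t) = t.
  move=> t; apply: val_inj => /=.
  by rewrite map_rev revK -map_comp -[RHS]map_id; apply: eq_map => i /=; rewrite rev_ordK.
rewrite /hsym [RHS](reindex h); last by exists h => t _.
apply: eq_big => t.
  rewrite /= rev_sorted sorted_map; apply: eq_sorted => u v /=.
  have := ltn_ord u; have := ltn_ord v => hv hu.
  by apply/idP/idP => H; lia.
by move=> _; rewrite /= big_rev big_map.
Qed.

Lemma hsym_last (K : comRingType) m d (x : 'I_m.+1 -> K) :
  hsym d.+1 x = hsym d.+1 (fun i : 'I_m => x (widen_ord (leqnSn m) i)) + x ord_max * hsym d x.
Proof.
rewrite -[LHS]hsym_rev hsym_head -(@hsym_rev _ _ _ (fun i : 'I_m => x (widen_ord (leqnSn m) i))) -(@hsym_rev _ _ _ x).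
congr (_ + _ * _).
  apply: hsym_ext => i; congr x; apply: val_inj => /=; rewrite /bump /=; lia.
by congr x; apply: val_inj => /=; lia.
Qed.

Lemma hsym0 (K : comRingType) n (x : 'I_n -> K) : hsym 0 x = 1.
Proof.
rewrite /hsym (eq_bigl predT) => [|t]; last by rewrite tuple0.
rewrite (eq_bigr (fun _ => 1)) => [|t _]; last by rewrite tuple0 big_nil.
by rewrite sumr_const card_tuple expn0.
Qed.

Lemma hsymI0 (K : comRingType) d (x : 'I_0 -> K) : hsym d.+1 x = 0.
Proof. by rewrite /hsym big1 // => t _; case: (thead t). Qed.

Lemma hsym_scale (K : comRingType) n d (c : K) (x : 'I_n -> K) :
  hsym d (fun i => c * x i) = c ^+ d * hsym d x.
Proof.
rewrite /hsym mulr_sumr; apply: eq_bigr => t _.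
rewrite -{2}(size_tuple t); elim: (tval t) => [|a s IH]; first by rewrite big_nil big_nil mulr1.
by rewrite !big_cons IH /= exprS; ring.
Qed.

Lemma sum_step (K : comRingType) (A B : nat -> K) c l' :
  A 0%N = 1 -> B 0%N = 1 -> A l' = 0 -> (forall d, A d.+1 = B d.+1 + c * A d) ->
  (1 - c) * \sum_(i < l'.+1) A i = \sum_(i < l'.+1) B i.
Proof.
move=> A0 B0 Al hA.
have h1 : \sum_(i < l'.+1) A i = \sum_(i < l') A i by rewrite big_ord_recr /= Al addr0.
have h2 : \sum_(i < l'.+1) A i = 1 + \sum_(i < l') A i.+1.
  by rewrite big_ord_recl /= A0; congr (_ + _); apply: eq_bigr => i _; rewrite lift0.
have h3 : \sum_(i < l'.+1) B i = 1 + \sum_(i < l') B i.+1.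
  by rewrite big_ord_recl /= B0; congr (_ + _); apply: eq_bigr => i _; rewrite lift0.
have h4 : \sum_(i < l') A i.+1 = \sum_(i < l') B i.+1 + c * \sum_(i < l') A i.
  by rewrite mulr_sumr -big_split; apply: eq_bigr => i _.
rewrite h3 mulrBl mul1r {1}h2 h4 -h1; ring.
Qed.

Theorem mainTheorem5 (K : fieldType) (l : nat) (q : K)
  (hchar : [pchar K] =i pred0)
  (hl : odd l)
  (hq : l.-primitive_root (q ^+ 2))
  (n : nat) (hn2 : (2 <= n)%N) (hnl : (n <= l - 1)%N) :
  \sum_(i < l) hsym i (fun k : 'I_n => q ^+ (2 * k)) =
  l%:R / \prod_(1 <= j < n) (1 - q ^+ (2 * j)).
Proof.
set z := q ^+ 2.
pose H m d := hsym d (fun k : 'I_m => z ^+ k).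
have ->: \sum_(i < l) hsym i (fun k : 'I_n => q ^+ (2 * k)) = \sum_(i < l) H n i.
  by apply: eq_bigr => i _; apply: hsym_ext => k; rewrite exprM.
have ->: \prod_(1 <= j < n) (1 - q ^+ (2 * j)) = \prod_(1 <= j < n) (1 - z ^+ j).
  by apply: eq_bigr => j _; rewrite exprM.
have zl : z ^+ l = 1 by apply: prim_expr_order.
have znz : forall j, (0 < j < l)%N -> 1 - z ^+ j != 0.
  move=> j /andP[j0 jl]; rewrite subr_eq0 eq_sym -(prim_order_dvd hq).
  by apply/negP => /(dvdn_leq j0); rewrite leqNgt jl.
have HR : forall m d, H m.+1 d.+1 = z ^+ d.+1 * H m d.+1 + H m.+1 d.
  move=> m d; rewrite /H hsym_head expr0 mul1r; congr (_ + _).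
  rewrite -hsym_scale; apply: hsym_ext => i; rewrite lift0 exprS //.
have LR : forall m d, H m.+1 d.+1 = H m d.+1 + z ^+ m * H m.+1 d.
  by move=> m d; rewrite /H hsym_last.
have key : forall m d, (1 - z ^+ m) * H m.+1 d = (1 - z ^+ d.+1) * H m d.+1.
  move=> m d.
  have e1 : z ^+ d.+1 * H m d.+1 = H m.+1 d.+1 - H m.+1 d by rewrite HR addrK.
  have e2 : z ^+ m * H m.+1 d = H m.+1 d.+1 - H m d.+1 by rewrite LR addrC addKr.
  rewrite !mulrBl !mul1r e1 e2; ring.
have H0 : forall m, H m 0%N = 1 by move=> m; rewrite /H hsym0.
have H1 : forall d, H 1%N d = 1.
  elim=> [|d IH]; first exact: H0.
  by rewrite LR /H hsymI0 add0r expr0 mul1r.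
have l0 : (0 < l)%N by lia.
clear hl hchar.
case: l hq hnl l0 zl znz => [|l'] // hq' hnl _ zl znz.
have step : forall m, (0 < m)%N -> (m < l'.+1)%N ->
    (1 - z ^+ m) * \sum_(i < l'.+1) H m.+1 i = \sum_(i < l'.+1) H m i.
  move=> m m0 ml; apply: sum_step.
  - exact: H0.
  - exact: H0.
  - have := key m l'; rewrite zl subrr mul0r => /eqP.
    by rewrite mulf_eq0 (negbTE (znz m _)) ?m0 ?ml //= => /eqP.
  - move=> d; exact: LR.
have main : forall m, (0 < m)%N -> (m <= l')%N ->
    (\sum_(i < l'.+1) H m i) * \prod_(1 <= j < m) (1 - z ^+ j) = l'.+1%:R.
  elim=> [|m IH] // _ hm.
  case: m IH hm => [|m] IH hm.
    by rewrite big_geq // mulr1 (eq_bigr (fun _ => 1)) ?sumr_const ?card_ord // => i _; apply: H1.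
  rewrite big_nat_recr //=.
  have -> : forall a b c : K, a * (b * c) = (c * a) * b by move=> *; ring.
  rewrite step //; last by lia.
  by apply: IH => //; lia.
have Pnz : \prod_(1 <= j < n) (1 - z ^+ j) != 0.
  rewrite prodf_seq_neq0; apply/allP => j; rewrite mem_index_iota => hj.
  by apply/implyP => _; apply: znz; lia.
have hm := main n ltac:(lia) ltac:(lia).
by rewrite -hm mulrK // unitfE.
Qed.
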